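(* Let $\Gamma$ be a finite, compact, connected, bipartite metric graph with first Betti number $\beta$, and let $B\subset\partial\Gamma$ be nonempty. Then $$\lambda_{k+\beta+|B|-1}\big(L^{\rm a/st,N}(\Gamma,B)\big)=\lambda_k\big(L^{\rm st,D}(\Gamma,B)\big)\qquad\text{for all }k\in\mathbb N.$$
   Context: A finite compact metric graph $\Gamma$ consists of finitely many edges $e_n=[x_{2n-1},x_{2n}]\subset\mathbb R$, $n=1,\dots,E$, of positive lengths and a vertex set $\mathcal V=\{v_1,\dots,v_V\}$ which is a partition of the set of all edge endpoints; the degree of a vertex is the number of endpoints it contains (loops count twice); $\partial\Gamma$ is the set of vertices of degree one; $\beta=E-V+1$. $\Gamma$ is bipartite if $\mathcal V=\mathcal V_1\sqcup\mathcal V_2$ with every edge having one endpoint in a vertex of $\mathcal V_1$ and the other in a vertex of $\mathcal V_2$. $f(x_j)$ denotes the limit of $f$ at endpoint $x_j$, and $\partial f(x_j)=f'(x_j)$ if $x_j$ is a left endpoint, $-f'(x_j)$ if a right endpoint. $L^{\rm st,D}(\Gamma,B)$ acts as $-f''$ on each edge with domain all $f\in W^2_2(\Gamma\setminus\mathcal V)=\bigoplus_nW^2_2(e_n)$ satisfying $f=0$ at each vertex of $B$ and standard conditions ($f(x_i)=f(x_j)$ for $x_i,x_j\in v$, $\sum_{x_j\in v}\partial f(x_j)=0$) at all other vertices $v$. $L^{\rm a/st,N}(\Gamma,B)$ acts as $-f''$ with domain all $f\in W^2_2(\Gamma\setminus\mathcal V)$ satisfying $\partial f=0$ at each vertex of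 $B$ and anti-standard conditions ($\sum_{x_j\in v}f(x_j)=0$, $\partial f(x_i)=\partial f(x_j)$ for $x_i,x_j\in v$) at all other vertices $v$. Eigenvalues $\lambda_1\le\lambda_2\le\dots$ are counted with multiplicities. *)

(* Defs.v *)
From Stdlib Require Import Reals Lra Lia Arith List Relations.
Import ListNotations.
Open Scope R_scope.

(* Edges are indexed 0..E-1 (0-based);
   edge n is the interval [a n, b n] with a n < b n.  Endpoints are indexed
   0..2E-1: endpoint 2n is the left endpoint a n of edge n, endpoint 2n+1 is
   the right endpoint b n.  The vertex set is {0..V-1}; vtx j is the vertex
   (block of the partition) containing endpoint j. *)
Record MetricGraph := {
  nE : nat;
  nV : nat;
  ea : nat -> R;
  eb : nat -> R;
  vtx : nat -> nat;
  edge_pos : forall n, (n < nE)%nat -> ea n < eb n;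
  vtx_range : forall j, (j < 2 * nE)%nat -> (vtx j < nV)%nat;
  vtx_onto : forall v, (v < nV)%nat -> exists j, (j < 2 * nE)%nat /\ vtx j = v
}.

Definition endpoints (G : MetricGraph) : list nat := seq 0 (2 * nE G).

Definition at_v (G : MetricGraph) (v : nat) : list nat :=
  filter (fun j => Nat.eqb (vtx G j) v) (endpoints G).

Definition degree (G : MetricGraph) (v : nat) : nat := length (at_v G v).

Definition adj (G : MetricGraph) (u w : nat) : Prop :=
  exists n, (n < nE G)%nat /\
    ((vtx G (2 * n) = u /\ vtx G (2 * n + 1) = w) \/
     (vtx G (2 * n) = w /\ vtx G (2 * n + 1) = u)).

Definition connected (G : MetricGraph) : Prop :=
  forall u w, (u < nV G)%nat -> (w < nV G)%nat -> clos_refl_trans nat (adj G) u w.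

Definition bipartite (G : MetricGraph) : Prop :=
  exists col : nat -> bool, forall n, (n < nE G)%nat ->
    col (vtx G (2 * n)) <> col (vtx G (2 * n + 1)).

(* first Betti number E - V + 1 (nonnegative for connected graphs) *)
Definition betti (G : MetricGraph) : nat := (nE G + 1 - nV G)%nat.

Definition cardB (G : MetricGraph) (B : nat -> bool) : nat :=
  length (filter B (seq 0 (nV G))).

Definition Rsum (l : list R) : R := fold_right Rplus 0 l.

(* A function on the graph: f n is the function on edge n.
   f(x_j): limit value at endpoint j. *)
Definition ev (G : MetricGraph) (f : nat -> R -> R) (j : nat) : R :=
  if Nat.even j then f (Nat.div2 j) (ea G (Nat.div2 j))
  else f (Nat.div2 j) (eb G (Nat.div2 j)).

(* ∂f(x_j), where g n is the derivative of f n *)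
Definition dev (G : MetricGraph) (g : nat -> R -> R) (j : nat) : R :=
  if Nat.even j then g (Nat.div2 j) (ea G (Nat.div2 j))
  else - g (Nat.div2 j) (eb G (Nat.div2 j)).

(* vertex conditions, as predicates on (f, f') *)
Definition VCond := (nat -> R -> R) -> (nat -> R -> R) -> Prop.

(* L^{st,D}(Γ,B): Dirichlet on B, standard elsewhere *)
Definition StD (G : MetricGraph) (B : nat -> bool) : VCond := fun f g =>
  forall v, (v < nV G)%nat ->
    (B v = true -> forall j, In j (at_v G v) -> ev G f j = 0) /\
    (B v = false ->
       (forall i j, In i (at_v G v) -> In j (at_v G v) -> ev G f i = ev G f j) /\
       Rsum (map (dev G g) (at_v G v)) = 0).

(* L^{a/st,N}(Γ,B): Neumann on B, anti-standard elsewhere *)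
Definition AstN (G : MetricGraph) (B : nat -> bool) : VCond := fun f g =>
  forall v, (v < nV G)%nat ->
    (B v = true -> forall j, In j (at_v G v) -> dev G g j = 0) /\
    (B v = false ->
       Rsum (map (ev G f) (at_v G v)) = 0 /\
       (forall i j, In i (at_v G v) -> In j (at_v G v) -> dev G g i = dev G g j)).

(* -f'' = lam f on each edge, with g = f' (solutions are taken on the whole
   line, i.e. the unique smooth extension of the edge solution). *)
Definition solves (G : MetricGraph) (lam : R) (f g : nat -> R -> R) : Prop :=
  forall n x, (n < nE G)%nat ->
    derivable_pt_lim (f n) x (g n x) /\ derivable_pt_lim (g n) x (- lam * f n x).

Definition is_eigenpair (G : MetricGraph) (C : VCond) (lam : R) (f g : nat -> R -> R) : Prop :=
  solves G lam f g /\ C f g.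

Definition lin_indep (G : MetricGraph) (k : nat) (fs : nat -> nat -> R -> R) : Prop :=
  forall c : nat -> R,
    (forall n x, (n < nE G)%nat -> ea G n <= x <= eb G n ->
        Rsum (map (fun i => c i * fs i n x) (seq 0 k)) = 0) ->
    forall i, (i < k)%nat -> c i = 0.

(* N(lam) >= k: the eigenvalues <= lam, counted with multiplicity, number at least k *)
Definition count_ge (G : MetricGraph) (C : VCond) (lam : R) (k : nat) : Prop :=
  exists (mu : nat -> R) (fs gs : nat -> nat -> R -> R),
    (forall i, (i < k)%nat -> mu i <= lam /\ is_eigenpair G C (mu i) (fs i) (gs i)) /\
    lin_indep G k fs.

(* lam = lambda_k (k >= 1), eigenvalues counted with multiplicities *)
Definition is_kth_eigenvalue (G : MetricGraph) (C : VCond) (k : nat) (lam : R) : Prop :=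
  count_ge G C lam k /\ forall mu, mu < lam -> ~ count_ge G C mu k.

(* Main.v *)
Require Import Defs.
From Stdlib Require Import Reals Lra Lia Arith List Relations.

Definition linind (E p : nat) (cs : nat -> nat -> R) : Prop :=
  forall d : nat -> R, (forall n, (n < E)%nat -> Rsum (map (fun i => d i * cs i n) (seq 0 p)) = 0) ->
  forall i, (i < p)%nat -> d i = 0.
Definition orthM (E r : nat) (M : nat -> nat -> R) (c : nat -> R) : Prop :=
  forall i', (i' < r)%nat -> Rsum (map (fun n => c n * M i' n) (seq 0 E)) = 0.
Definition rowindep (E r : nat) (M : nat -> nat -> R) : Prop :=
  forall y : nat -> R, (forall n, (n < E)%nat -> Rsum (map (fun i => y i * M i n) (seq 0 r)) = 0) ->
  forall i, (i < r)%nat -> y i = 0.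

Module LA.
From mathcomp Require Import all_boot all_algebra.
From mathcomp Require Import Rstruct.
Import GRing.Theory.
Local Open Scope ring_scope.

Lemma sumE_gen (F : nat -> R) k s : Rsum (map F (List.seq s k)) = \sum_(i < k) F (s + i)%N.
Proof.
elim: k s => [|k IH] s /=; first by rewrite big_ord0.
rewrite big_ord_recl /= IH addn0.
congr (_ + _)%R; apply: eq_bigr => i _; by rewrite /= addSnnS.
Qed.

Lemma sumE (F : nat -> R) k : Rsum (map F (List.seq 0 k)) = \sum_(i < k) F i.
Proof. by rewrite sumE_gen. Qed.

Definition vf {k : nat} (u : 'rV[R]_k) (i : nat) : R :=
  match @insub nat (fun x => x < k)%N _ i with Some ii => u 0 ii | None => 0 end.

Lemma vfE k (u : 'rV[R]_k) (i : 'I_k) : vf u i = u 0 i.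
Proof. by rewrite /vf valK. Qed.

Lemma free_of_inj r E (A : 'M[R]_(r, E)) : (forall u : 'rV_r, u *m A = 0 -> u = 0) -> row_free A.
Proof.
move=> H; rewrite -kermx_eq0; apply/eqP; apply/row_matrixP => i; rewrite row0.
apply: H; apply/sub_kermxP; exact: row_sub.
Qed.

Lemma rowfreeM E r M : rowindep E r M -> row_free (\matrix_(i < r, n < E) M i n).
Proof.
move=> H; apply: free_of_inj => u Hu; apply/rowP => i; rewrite mxE -vfE.
apply: H; last exact/ltP/ltn_ord.
move=> n /ltP ltn; rewrite sumE.
transitivity ((u *m (\matrix_(i < r, n < E) M i n)) 0 (Ordinal ltn)); last by rewrite Hu mxE.
rewrite mxE; by apply: eq_bigr => j _; rewrite mxE vfE.
Qed.

Lemma LA1 E r M : rowindep E r M -> forall p cs, (forall i, lt i p -> orthM E r M (cs i)) ->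
  linind E p cs -> le (Nat.add p r) E.
Proof.
move=> HM p cs Ho Hl.
set Mx := \matrix_(i < r, n < E) M i n.
set C := \matrix_(i < p, n < E) cs i n.
have fM : row_free Mx by exact: rowfreeM.
have sC : (C <= kermx Mx^T)%MS.
  apply/sub_kermxP; apply/matrixP => i j; rewrite [RHS]mxE.
  transitivity (Rsum (map (fun n => cs i n * M j n) (List.seq 0 E)));
    last exact: (Ho i (ltP (ltn_ord i)) j (ltP (ltn_ord j))).
  rewrite sumE mxE.
  by apply: eq_bigr => n _; rewrite !mxE.
have fC : row_free C.
  apply: free_of_inj => u Hu; apply/rowP => i; rewrite mxE -vfE.
  apply: Hl; last exact/ltP/ltn_ord.
  move=> n /ltP ltn; rewrite sumE.
  transitivity ((u *m C) 0 (Ordinal ltn)); last by rewrite Hu mxE.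
  rewrite mxE; by apply: eq_bigr => j _; rewrite mxE vfE.
have := mxrankS sC; rewrite mxrank_ker mxrank_tr (eqP fM) (eqP fC) => h.
have hr : (r <= E)%N by rewrite -(eqP fM) rank_leq_col.
apply/leP; by rewrite -(leq_add2r r) subnK in h.
Qed.

Lemma LA2 E r M : rowindep E r M -> exists cs, (forall i, lt i (Nat.sub E r) -> orthM E r M (cs i)) /\
  linind E (Nat.sub E r) cs.
Proof.
move=> HM.
set Mx := \matrix_(i < r, n < E) M i n.
have fM : row_free Mx by exact: rowfreeM.
set K := kermx Mx^T.
have hK : \rank K = Nat.sub E r by rewrite mxrank_ker mxrank_tr (eqP fM).
set C := row_base K.
pose cs i n := match @insub nat (fun x => x < \rank K)%N _ i with
  | Some ii => vf (row ii C) n | None => 0 end.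
have csE : forall (ii : 'I_(\rank K)) (nn : 'I_E), cs ii nn = C ii nn.
  by move=> ii nn; rewrite /cs valK vfE mxE.
have sC : (C <= K)%MS by rewrite eq_row_base.
have hC : C *m Mx^T = 0 by apply/sub_kermxP.
exists cs; split.
  move=> i /ltP; rewrite -hK => hi i' /ltP hi'.
  transitivity ((C *m Mx^T) (Ordinal hi) (Ordinal hi')); last by rewrite hC mxE.
  rewrite sumE mxE; apply: eq_bigr => n _.
  rewrite (csE (Ordinal hi) n); congr (_ * _)%R; by rewrite !mxE.
move=> d; rewrite -hK => Hd.
have : \row_(i < \rank K) d i = 0.
  apply: (row_free_inj (row_base_free K)); rewrite mul0mx.
  apply/rowP => n; rewrite [RHS]mxE.
  transitivity (Rsum (map (fun i => d i * cs i n) (List.seq 0 (\rank K))));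
    last exact: (Hd n (ltP (ltn_ord n))).
  rewrite sumE mxE; apply: eq_bigr => i _.
  rewrite (csE i n); congr (_ * _)%R; by rewrite !mxE.
move=> h0 i /ltP hi.
have := congr1 (fun A : 'rV_(\rank K) => A 0 (Ordinal hi)) h0; by rewrite !mxE.
Qed.

End LA.

Import ListNotations.
Open Scope R_scope.

Lemma Rsum_app l1 l2 : Rsum (l1 ++ l2) = Rsum l1 + Rsum l2.
Proof. induction l1; simpl; [lra|rewrite IHl1; lra]. Qed.

Lemma Rsum_ext {A} (l : list A) F G : (forall x, In x l -> F x = G x) ->
  Rsum (map F l) = Rsum (map G l).
Proof.
  induction l; intros H; simpl; auto.
  rewrite H by (left; auto). rewrite IHl; auto. intros; apply H; right; auto.
Qed.

Lemma Rsum_add {A} (l : list A) F G :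
  Rsum (map (fun x => F x + G x) l) = Rsum (map F l) + Rsum (map G l).
Proof. induction l; simpl; [lra|rewrite IHl; lra]. Qed.

Lemma Rsum_scal {A} (l : list A) c F :
  Rsum (map (fun x => c * F x) l) = c * Rsum (map F l).
Proof. induction l; simpl; [lra|rewrite IHl; lra]. Qed.

Lemma Rsum_opp {A} (l : list A) F :
  Rsum (map (fun x => - F x) l) = - Rsum (map F l).
Proof. induction l; simpl; [lra|rewrite IHl; lra]. Qed.

Lemma Rsum_zero {A} (l : list A) F : (forall x, In x l -> F x = 0) -> Rsum (map F l) = 0.
Proof.
  intros H. rewrite (Rsum_ext l F (fun _ => 0)) by auto.
  clear H; induction l; simpl; [lra|rewrite IHl; lra].
Qed.

Lemma Rsum_nonneg {A} (l : list A) F : (forall x, In x l -> 0 <= F x) -> 0 <= Rsum (map F l).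
Proof.
  induction l; simpl; intros H; [lra|].
  assert (0 <= F a) by (apply H; auto). assert (0 <= Rsum (map F l)) by (apply IHl; auto). lra.
Qed.

Lemma Rsum_nonneg_zero {A} (l : list A) F : (forall x, In x l -> 0 <= F x) ->
  Rsum (map F l) = 0 -> forall x, In x l -> F x = 0.
Proof.
  induction l; simpl; intros H H0 x Hx; [contradiction|].
  assert (0 <= F a) by (apply H; auto). assert (0 <= Rsum (map F l)) by (apply Rsum_nonneg; auto).
  destruct Hx as [<-|Hx]; [lra|]. apply IHl; auto. lra.
Qed.

Lemma Rsum_ind_in (l : list nat) j0 (c : nat -> R) : NoDup l -> In j0 l ->
  Rsum (map (fun j => if Nat.eqb j j0 then c j else 0) l) = c j0.
Proof.
  induction l; simpl; intros Hn Hi; [contradiction|].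
  inversion Hn; subst.
  destruct Hi as [->|Hi].
  - rewrite Nat.eqb_refl. rewrite Rsum_zero; [lra|].
    intros x Hx. destruct (Nat.eqb_spec x j0); subst; [contradiction|auto].
  - destruct (Nat.eqb_spec a j0); subst; [contradiction|]. rewrite IHl; auto; lra.
Qed.

Lemma Rsum_ind_notin (l : list nat) j0 (c : nat -> R) : ~ In j0 l ->
  Rsum (map (fun j => if Nat.eqb j j0 then c j else 0) l) = 0.
Proof.
  intros H; apply Rsum_zero; intros x Hx. destruct (Nat.eqb_spec x j0); subst; [contradiction|auto].
Qed.

Lemma Rsum_swap {A B} (l1 : list A) (l2 : list B) F :
  Rsum (map (fun i => Rsum (map (fun j => F i j) l2)) l1) =
  Rsum (map (fun j => Rsum (map (fun i => F i j) l1)) l2).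
Proof.
  induction l1; simpl.
  - symmetry; apply Rsum_zero; auto.
  - rewrite IHl1. rewrite <- Rsum_add. reflexivity.
Qed.

Lemma Rsum_filter {A} (l : list A) (P : A -> bool) F :
  Rsum (map F (filter P l)) = Rsum (map (fun x => if P x then F x else 0) l).
Proof. induction l; simpl; auto. destruct (P a); simpl; rewrite IHl; lra. Qed.

Lemma Rsum_pairs E (F : nat -> R) :
  Rsum (map F (seq 0 (2 * E))) = Rsum (map (fun n => F (2 * n)%nat + F (2 * n + 1)%nat) (seq 0 E)).
Proof.
  induction E; [reflexivity|].
  replace (2 * S E)%nat with (2 * E + 2)%nat by lia.
  rewrite seq_app, (seq_S E 0), !map_app, !Rsum_app, IHE.
  replace (seq (0 + 2 * E) 2) with [(2*E)%nat; (2*E+1)%nat] by (simpl; f_equal; f_equal; lia).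
  replace (0 + E)%nat with E by lia. simpl. lra.
Qed.

Section G.
Variable G : MetricGraph.

Lemma in_at_v v j : In j (at_v G v) <-> (j < 2 * nE G)%nat /\ vtx G j = v.
Proof.
  unfold at_v, endpoints. rewrite filter_In, in_seq, Nat.eqb_eq. lia.
Qed.

Lemma ev_L f n : ev G f (2 * n) = f n (ea G n).
Proof. unfold ev. rewrite Nat.even_even, Nat.div2_double. reflexivity. Qed.
Lemma ev_R f n : ev G f (2 * n + 1) = f n (eb G n).
Proof. unfold ev. rewrite Nat.even_odd, Nat.div2_odd'. reflexivity. Qed.
Lemma dev_L f n : dev G f (2 * n) = f n (ea G n).
Proof. unfold dev. rewrite Nat.even_even, Nat.div2_double. reflexivity. Qed.
Lemma dev_R f n : dev G f (2 * n + 1) = - f n (eb G n).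
Proof. unfold dev. rewrite Nat.even_odd, Nat.div2_odd'. reflexivity. Qed.

Lemma endpoint_dec j : (j < 2 * nE G)%nat ->
  exists n, (n < nE G)%nat /\ (j = 2 * n \/ j = 2 * n + 1)%nat.
Proof.
  intros H. destruct (Nat.Even_or_Odd j) as [[n ->]|[n ->]]; exists n; split; try lia; auto.
Qed.

Lemma regroup (F : nat -> R) l : (forall j, In j l -> (vtx G j < nV G)%nat) ->
  Rsum (map F l) = Rsum (map (fun v => Rsum (map F (filter (fun j => Nat.eqb (vtx G j) v) l))) (seq 0 (nV G))).
Proof.
  induction l as [|a l IH]; intros H.
  - simpl. symmetry; apply Rsum_zero; auto.
  - simpl. rewrite IH by (intros; apply H; right; auto).
    transitivity (Rsum (map (fun v => (if Nat.eqb v (vtx G a) then F a else 0) +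
       Rsum (map F (filter (fun j => Nat.eqb (vtx G j) v) l))) (seq 0 (nV G)))).
    + rewrite Rsum_add. f_equal. symmetry.
      apply (Rsum_ind_in (seq 0 (nV G)) (vtx G a) (fun _ => F a)).
      apply seq_NoDup. apply in_seq. specialize (H a (or_introl eq_refl)). lia.
    + apply Rsum_ext. intros v _. rewrite (Nat.eqb_sym v).
      destruct (Nat.eqb (vtx G a) v); simpl; lra.
Qed.

Lemma regroup_endpoints (F : nat -> R) :
  Rsum (map F (endpoints G)) = Rsum (map (fun v => Rsum (map F (at_v G v))) (seq 0 (nV G))).
Proof.
  apply regroup. intros j Hj. unfold endpoints in Hj. apply in_seq in Hj. apply vtx_range. lia.
Qed.

Lemma boundary_S B f g : StD G B f g ->
  Rsum (map (fun j => ev G f j * dev G g j) (endpoints G)) = 0.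
Proof.
  intros H. rewrite regroup_endpoints. apply Rsum_zero. intros v Hv. apply in_seq in Hv.
  destruct (H v ltac:(lia)) as [H1 H2]. destruct (B v) eqn:Bv.
  - apply Rsum_zero. intros j Hj. rewrite (H1 eq_refl j Hj). lra.
  - destruct (H2 eq_refl) as [Hc Hs]. destruct (at_v G v) as [|j0 l] eqn:E; [reflexivity|].
    rewrite (Rsum_ext _ _ (fun j => ev G f j0 * dev G g j)).
    + rewrite Rsum_scal, Hs. lra.
    + intros j Hj. rewrite (Hc j j0); auto. left; auto.
Qed.

Lemma boundary_A B f g : AstN G B f g ->
  Rsum (map (fun j => ev G f j * dev G g j) (endpoints G)) = 0.
Proof.
  intros H. rewrite regroup_endpoints. apply Rsum_zero. intros v Hv. apply in_seq in Hv.
  destruct (H v ltac:(lia)) as [H1 H2]. destruct (B v) eqn:Bv.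
  - apply Rsum_zero. intros j Hj. rewrite (H1 eq_refl j Hj). lra.
  - destruct (H2 eq_refl) as [Hs Hc]. destruct (at_v G v) as [|j0 l] eqn:E; [reflexivity|].
    rewrite (Rsum_ext _ _ (fun j => dev G g j0 * ev G f j)).
    + rewrite Rsum_scal, Hs. lra.
    + intros j Hj. rewrite (Hc j j0); auto. lra. left; auto.
Qed.

End G.

Lemma const_deriv (phi : R -> R) a b x l : a < b -> (forall y, a <= y <= b -> phi y = phi a) ->
  a <= x <= b -> derivable_pt_lim phi x l -> l = 0.
Proof.
  intros hab Hc Hx Hd. destruct (Req_dec l 0) as [|Hl]; auto. exfalso.
  destruct (Hd (Rabs l) (Rabs_pos_lt l Hl)) as [[d Hdp] Hdl]. simpl in Hdl.
  destruct (Rlt_le_dec x b) as [Hxb|Hxb].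
  - set (h := Rmin (d/2) (b - x)).
    assert (0 < h) by (unfold h; apply Rmin_pos; lra).
    assert (h <= d/2) by apply Rmin_l. assert (h <= b - x) by apply Rmin_r.
    specialize (Hdl h ltac:(lra) ltac:(rewrite Rabs_pos_eq; lra)).
    rewrite (Hc (x+h)), (Hc x) in Hdl by lra.
    replace ((phi a - phi a) / h - l) with (- l) in Hdl by (field; lra).
    rewrite Rabs_Ropp in Hdl. lra.
  - set (h := - Rmin (d/2) (b - a)).
    assert (0 < Rmin (d/2) (b-a)) by (apply Rmin_pos; lra).
    assert (Rmin (d/2) (b-a) <= d/2) by apply Rmin_l. assert (Rmin (d/2) (b-a) <= b - a) by apply Rmin_r.
    specialize (Hdl h ltac:(unfold h; lra) ltac:(unfold h; rewrite Rabs_Ropp, Rabs_pos_eq; lra)).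
    rewrite (Hc (x+h)), (Hc x) in Hdl by (unfold h; lra).
    replace ((phi a - phi a) / h - l) with (- l) in Hdl by (field; unfold h; lra).
    rewrite Rabs_Ropp in Hdl. lra.
Qed.

Lemma mono_of_deriv (phi phi' : R -> R) : (forall x, derivable_pt_lim phi x (phi' x)) ->
  (forall x, 0 <= phi' x) -> forall x y, x <= y -> phi x <= phi y.
Proof.
  intros Hd Hp x y Hxy. destruct (Req_dec x y) as [->|Hne]; [lra|].
  destruct (MVT_cor2 phi phi' x y ltac:(lra) (fun c _ => Hd c)) as [c [Hc _]].
  specialize (Hp c). nra.
Qed.

Lemma energy G lam f g :
  Rsum (map (fun j => ev G f j * dev G g j) (endpoints G)) = 0 -> lam <= 0 -> solves G lam f g ->
  forall n x, (n < nE G)%nat -> ea G n <= x <= eb G n -> g n x = 0 /\ (lam < 0 -> f n x = 0).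
Proof.
  intros Hb Hl Hs.
  assert (Hd : forall n x, (n < nE G)%nat -> derivable_pt_lim (fun y => f n y * g n y) x
                      (g n x * g n x + f n x * (- lam * f n x))).
  { intros n x Hn. destruct (Hs n x Hn) as [H1 H2]. exact (derivable_pt_lim_mult _ _ _ _ _ H1 H2). }
  assert (Hm : forall n, (n < nE G)%nat -> forall x y, x <= y -> f n x * g n x <= f n y * g n y).
  { intros n Hn. apply (mono_of_deriv _ (fun x => g n x * g n x + f n x * (- lam * f n x))).
    - intros x; apply Hd; auto.
    - intros x. nra. }
  unfold endpoints in Hb. rewrite Rsum_pairs in Hb.
  rewrite (Rsum_ext _ _ (fun n => - (f n (eb G n) * g n (eb G n) - f n (ea G n) * g n (ea G n)))) in Hb
    by (intros n _; rewrite ev_L, ev_R, dev_L, dev_R; lra).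
  rewrite Rsum_opp in Hb.
  assert (Hz := Rsum_nonneg_zero (seq 0 (nE G)) (fun n => f n (eb G n) * g n (eb G n) - f n (ea G n) * g n (ea G n))).
  intros n x Hn Hx.
  assert (Hn' : In n (seq 0 (nE G))) by (apply in_seq; lia).
  assert (hab := edge_pos G n Hn).
  specialize (Hz ltac:(intros m Hm'; apply in_seq in Hm'; specialize (Hm m ltac:(lia) (ea G m) (eb G m));
     assert (ea G m < eb G m) by (apply edge_pos; lia); lra) ltac:(lra) n Hn').
  simpl in Hz.
  assert (Hc : forall y, ea G n <= y <= eb G n -> f n y * g n y = f n (ea G n) * g n (ea G n)).
  { intros y Hy. assert (h1 := Hm n Hn (ea G n) y ltac:(lra)). assert (h2 := Hm n Hn y (eb G n) ltac:(lra)). lra. }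
  assert (H0 := const_deriv _ _ _ _ _ hab Hc Hx (Hd n x Hn)).
  split.
  - nra.
  - intros Hlt. assert (0 <= g n x * g n x) by nra. assert (0 <= f n x * f n x) by nra.
    assert (f n x * f n x = 0) by nra. nra.
Qed.

Lemma propagate G (P : nat -> Prop) b0 : connected G -> (b0 < nV G)%nat -> P b0 ->
  (forall u w, adj G u w -> P u -> P w) -> forall w, (w < nV G)%nat -> P w.
Proof.
  intros Hc Hb Hp Hs w Hw. specialize (Hc b0 w Hb Hw).
  clear Hb Hw. revert Hp. induction Hc; intros Hp; eauto.
Qed.

Lemma const_edge G lam f g n : solves G lam f g -> (n < nE G)%nat ->
  (forall x, ea G n <= x <= eb G n -> g n x = 0) ->
  forall x, ea G n <= x <= eb G n -> f n x = f n (ea G n).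
Proof.
  intros Hs Hn Hg x Hx. destruct (Req_dec x (ea G n)) as [->|Hne]; auto.
  destruct (MVT_cor2 (f n) (g n) (ea G n) x ltac:(lra)) as [c [Hc Hc2]].
  - intros c Hc. apply (Hs n c Hn).
  - rewrite Hg in Hc by lra. lra.
Qed.

Lemma S_nonpos_zero G B lam f g : connected G -> (exists b0, B b0 = true /\ (b0 < nV G)%nat) ->
  lam <= 0 -> is_eigenpair G (StD G B) lam f g ->
  forall n x, (n < nE G)%nat -> ea G n <= x <= eb G n -> f n x = 0.
Proof.
  intros Hcon [b0 [Hb0 Hb0V]] Hl [Hs Hc].
  assert (He := energy G lam f g (boundary_S G B f g Hc) Hl Hs).
  destruct (Rle_lt_dec 0 lam) as [Hl0|Hl0].
  2:{ intros n x Hn Hx. apply (He n x Hn Hx); auto. }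
  assert (Hconst : forall n, (n < nE G)%nat -> forall x, ea G n <= x <= eb G n -> f n x = f n (ea G n)).
  { intros n Hn. apply (const_edge G lam f g n Hs Hn). intros x Hx. apply (He n x Hn Hx). }
  assert (Hab : forall n, (n < nE G)%nat -> ev G f (2 * n) = ev G f (2 * n + 1)).
  { intros n Hn. rewrite ev_L, ev_R. symmetry; apply Hconst; auto.
    assert (ea G n < eb G n) by (apply edge_pos; auto). lra. }
  assert (HP : forall w, (w < nV G)%nat -> forall j, (j < 2 * nE G)%nat -> vtx G j = w -> ev G f j = 0).
  { apply (propagate G (fun w => forall j, (j < 2 * nE G)%nat -> vtx G j = w -> ev G f j = 0) b0 Hcon Hb0V).
    - intros j Hj Hv. destruct (Hc b0 Hb0V) as [H1 _]. apply (H1 Hb0). apply in_at_v; auto.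
    - intros u w [n [Hn Hor]] Hu j Hj Hv.
      assert (Hw : exists jw, (jw < 2 * nE G)%nat /\ vtx G jw = w /\ ev G f jw = 0).
      { destruct Hor as [[H1 H2]|[H1 H2]].
        - exists (2 * n + 1)%nat. split; [lia|split; auto]. rewrite <- Hab by auto. apply Hu; auto; lia.
        - exists (2 * n)%nat. split; [lia|split; auto]. rewrite Hab by auto. apply Hu; auto; lia. }
      destruct Hw as [jw [Hjw1 [Hjw2 Hjw3]]].
      assert (HwV : (w < nV G)%nat) by (subst w; apply vtx_range; auto).
      destruct (Hc w HwV) as [H1 H2]. destruct (B w) eqn:Bw.
      + apply (H1 eq_refl). apply in_at_v; auto.
      + destruct (H2 eq_refl) as [H3 _]. rewrite (H3 j jw); auto; apply in_at_v; auto. }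
  intros n x Hn Hx. rewrite Hconst by auto. rewrite <- ev_L. apply (HP (vtx G (2 * n))); auto.
  apply vtx_range; lia. lia.
Qed.

(* kernel of A *)
Definition Kvec G B (c : nat -> R) : Prop :=
  forall v, (v < nV G)%nat -> B v = false -> Rsum (map (fun j => c (Nat.div2 j)) (at_v G v)) = 0.

Lemma A_zero_const G B f g : is_eigenpair G (AstN G B) 0 f g ->
  (forall n x, (n < nE G)%nat -> ea G n <= x <= eb G n -> f n x = f n (ea G n)) /\
  Kvec G B (fun n => f n (ea G n)).
Proof.
  intros [Hs Hc].
  assert (He := energy G 0 f g (boundary_A G B f g Hc) ltac:(lra) Hs).
  assert (Hconst : forall n, (n < nE G)%nat -> forall x, ea G n <= x <= eb G n -> f n x = f n (ea G n)).
  { intros n Hn. apply (const_edge G 0 f g n Hs Hn). intros x Hx. apply (He n x Hn Hx). }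
  split; [intros; apply Hconst; auto|].
  intros v Hv Bv. destruct (Hc v Hv) as [_ H2]. destruct (H2 Bv) as [H3 _].
  rewrite <- H3. apply Rsum_ext. intros j Hj. apply in_at_v in Hj. destruct Hj as [Hj _].
  destruct (endpoint_dec G j Hj) as [n [Hn [->| ->]]].
  - rewrite ev_L, Nat.div2_double. auto.
  - rewrite ev_R, Nat.div2_odd'. symmetry; apply Hconst; auto.
    assert (ea G n < eb G n) by (apply edge_pos; auto). lra.
Qed.

Lemma A_kernel_pair G B c : Kvec G B c ->
  is_eigenpair G (AstN G B) 0 (fun n _ => c n) (fun _ _ => 0).
Proof.
  intros Hk. split.
  - intros n x Hn. split.
    + apply derivable_pt_lim_const.
    + replace (-0 * c n) with 0 by ring. apply derivable_pt_lim_const.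
  - intros v Hv. split.
    + intros _ j _. unfold dev. destruct (Nat.even j); lra.
    + intros Bv. split.
      * rewrite <- (Hk v Hv Bv). apply Rsum_ext. intros j _. unfold ev. destruct (Nat.even j); auto.
      * intros i j _ _. unfold dev. destruct (Nat.even i), (Nat.even j); lra.
Qed.

Definition wl G (D : nat -> bool) := filter (fun v => negb (D v)) (seq 0 (nV G)).
Definition cnt G v n : R := (if Nat.eqb (vtx G (2*n)) v then 1 else 0) + (if Nat.eqb (vtx G (2*n+1)) v then 1 else 0).
Definition Mat G D i n := cnt G (nth i (wl G D) 0%nat) n.

Lemma atv_sum G v c : Rsum (map (fun j => c (Nat.div2 j)) (at_v G v)) =
  Rsum (map (fun n => c n * cnt G v n) (seq 0 (nE G))).
Proof.
  unfold at_v, endpoints. rewrite Rsum_filter, Rsum_pairs. apply Rsum_ext. intros n _.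
  rewrite Nat.div2_double, Nat.div2_odd'. unfold cnt.
  destruct (Nat.eqb (vtx G (2*n)) v), (Nat.eqb (vtx G (2*n+1)) v); lra.
Qed.

Lemma wl_spec G D v : In v (wl G D) <-> (v < nV G)%nat /\ D v = false.
Proof. unfold wl. rewrite filter_In, in_seq. destruct (D v); simpl; split; intros; intuition; lia || discriminate. Qed.

Lemma wl_nodup G D : NoDup (wl G D).
Proof. apply NoDup_filter, seq_NoDup. Qed.

Lemma len_wl G D : (length (wl G D) + length (filter D (seq 0 (nV G))) = nV G)%nat.
Proof.
  unfold wl. rewrite Nat.add_comm, filter_length, length_seq. reflexivity.
Qed.

Lemma rowindep_G G D b0 : connected G -> D b0 = true -> (b0 < nV G)%nat ->
  rowindep (nE G) (length (wl G D)) (Mat G D).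
Proof.
  intros Hcon Db0 Hb0 y Hy.
  set (r := length (wl G D)). set (w := fun i => nth i (wl G D) 0%nat).
  set (Y := fun v => Rsum (map (fun i => if Nat.eqb (w i) v then y i else 0) (seq 0 r))).
  assert (HY : forall n, (n < nE G)%nat -> Y (vtx G (2*n)) + Y (vtx G (2*n+1)) = 0).
  { intros n Hn. rewrite <- (Hy n Hn). unfold Y. rewrite <- Rsum_add. apply Rsum_ext. intros i _.
    unfold Mat, cnt. fold (w i). rewrite (Nat.eqb_sym (w i)), (Nat.eqb_sym (w i)).
    destruct (Nat.eqb (vtx G (2*n)) (w i)), (Nat.eqb (vtx G (2*n+1)) (w i)); lra. }
  assert (HD : forall v, D v = true -> Y v = 0).
  { intros v Dv. apply Rsum_zero. intros i Hi. apply in_seq in Hi.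
    destruct (Nat.eqb_spec (w i) v) as [Heq|]; auto.
    assert (Hin : In (w i) (wl G D)) by (apply nth_In; lia).
    apply wl_spec in Hin. rewrite Heq in Hin. destruct Hin; congruence. }
  assert (Hw : forall i0, (i0 < r)%nat -> Y (w i0) = y i0).
  { intros i0 Hi0. unfold Y. rewrite (Rsum_ext _ _ (fun i => if Nat.eqb i i0 then y i else 0)).
    - apply Rsum_ind_in. apply seq_NoDup. apply in_seq; lia.
    - intros i Hi. apply in_seq in Hi.
      destruct (Nat.eqb_spec (w i) (w i0)) as [Heq|Hne], (Nat.eqb_spec i i0) as [|Hne']; subst; auto.
      + exfalso. apply Hne'. apply (proj1 (NoDup_nth (wl G D) 0%nat) (wl_nodup G D)); auto; lia.
      + congruence. }
  assert (HZ : forall v, (v < nV G)%nat -> Y v = 0).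
  { apply (propagate G (fun v => Y v = 0) b0 Hcon Hb0 (HD b0 Db0)).
    intros u v [n [Hn [[H1 H2]|[H1 H2]]]] Hu; specialize (HY n Hn); subst; lra. }
  intros i Hi. rewrite <- Hw by auto. apply HZ.
  assert (Hin : In (w i) (wl G D)) by (apply nth_In; lia). apply wl_spec in Hin. tauto.
Qed.

Lemma Kvec_orth G B c : Kvec G B c <-> orthM (nE G) (length (wl G B)) (Mat G B) c.
Proof.
  split.
  - intros Hk i Hi. unfold Mat. rewrite <- atv_sum.
    assert (Hin : In (nth i (wl G B) 0%nat) (wl G B)) by (apply nth_In; lia).
    apply wl_spec in Hin. apply Hk; tauto.
  - intros Ho v Hv Bv. rewrite atv_sum.
    assert (Hin : In v (wl G B)) by (apply wl_spec; auto).
    destruct (In_nth _ _ 0%nat Hin) as [i [Hi Hiv]].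
    specialize (Ho i Hi). unfold Mat in Ho. rewrite Hiv in Ho. exact Ho.
Qed.

Lemma len_single V b0 : (b0 < V)%nat -> length (filter (fun v => Nat.eqb v b0) (seq 0 V)) = 1%nat.
Proof.
  intros H. assert (Hg : forall V, length (filter (fun v => Nat.eqb v b0) (seq 0 V)) = if Nat.ltb b0 V then 1%nat else 0%nat).
  { clear. intros W. induction W as [|V0 IHV0]; [reflexivity|]. rewrite seq_S, filter_app, length_app, IHV0. simpl.
    destruct (Nat.eqb_spec V0 b0), (Nat.ltb_spec b0 V0), (Nat.ltb_spec b0 (S V0)); simpl; lia. }
  rewrite Hg. destruct (Nat.ltb_spec b0 V); lia.
Qed.

Lemma V_le G b0 : connected G -> (b0 < nV G)%nat -> (nV G <= nE G + 1)%nat.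
Proof.
  intros Hc Hb.
  assert (H := LA.LA1 _ _ _ (rowindep_G G (fun v => Nat.eqb v b0) b0 Hc (Nat.eqb_refl b0) Hb) 0%nat (fun _ _ => 0)
    ltac:(intros; lia) ltac:(intros d _ i Hi; lia)).
  assert (H2 := len_wl G (fun v => Nat.eqb v b0)). rewrite len_single in H2 by auto. lia.
Qed.

Definition sg (col : nat -> bool) v : R := if col v then 1 else -1.
Definition smul G col (u : nat -> R -> R) : nat -> R -> R := fun n x => sg col (vtx G (2*n)) * u n x.
Definition scl (c : R) (u : nat -> R -> R) : nat -> R -> R := fun n x => c * u n x.

Lemma sg_nz col v : sg col v <> 0.
Proof. unfold sg; destruct (col v); lra. Qed.

Lemma ev_scl G c u j : ev G (scl c u) j = c * ev G u j.
Proof. unfold ev, scl. destruct (Nat.even j); ring. Qed.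
Lemma dev_scl G c u j : dev G (scl c u) j = c * dev G u j.
Proof. unfold dev, scl. destruct (Nat.even j); ring. Qed.

Section Sign.
Variable G : MetricGraph.
Variable col : nat -> bool.
Hypothesis Hbip : forall n, (n < nE G)%nat -> col (vtx G (2 * n)) <> col (vtx G (2 * n + 1)).

Lemma sg_opp n : (n < nE G)%nat -> sg col (vtx G (2 * n + 1)) = - sg col (vtx G (2 * n)).
Proof. intros Hn. specialize (Hbip n Hn). unfold sg. destruct (col (vtx G (2*n))), (col (vtx G (2*n+1))); try lra; congruence. Qed.

Lemma K1 u j : (j < 2 * nE G)%nat -> ev G (smul G col u) j = sg col (vtx G j) * dev G u j.
Proof.
  intros Hj. destruct (endpoint_dec G j Hj) as [n [Hn [->| ->]]].
  - rewrite ev_L, dev_L. reflexivity.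
  - rewrite ev_R, dev_R, sg_opp by auto. unfold smul. ring.
Qed.

Lemma K2 u j : (j < 2 * nE G)%nat -> dev G (smul G col u) j = sg col (vtx G j) * ev G u j.
Proof.
  intros Hj. destruct (endpoint_dec G j Hj) as [n [Hn [->| ->]]].
  - rewrite ev_L, dev_L. reflexivity.
  - rewrite ev_R, dev_R, sg_opp by auto. unfold smul. ring.
Qed.

Lemma T2 B lam f g : is_eigenpair G (StD G B) lam f g ->
  is_eigenpair G (AstN G B) lam (smul G col g) (smul G col (scl (- lam) f)).
Proof.
  intros [Hs Hc]. split.
  - intros n x Hn. destruct (Hs n x Hn) as [H1 H2]. split.
    + exact (derivable_pt_lim_scal (g n) _ x _ H2).
    + assert (H3 := derivable_pt_lim_scal (f n) (- lam) x _ H1).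
      assert (H4 := derivable_pt_lim_scal (fun y => - lam * f n y) (sg col (vtx G (2 * n))) x _ H3).
      unfold smul, scl. replace (- lam * (sg col (vtx G (2 * n)) * g n x)) with
        (sg col (vtx G (2 * n)) * (- lam * g n x)) by ring. exact H4.
  - intros v Hv. destruct (Hc v Hv) as [H1 H2]. split.
    + intros Bv j Hj. pose proof Hj as Hj'. apply in_at_v in Hj'. destruct Hj' as [Hj1 _].
      rewrite K2, ev_scl, (H1 Bv j Hj) by auto. ring.
    + intros Bv. destruct (H2 Bv) as [H3 H4]. split.
      * rewrite (Rsum_ext _ _ (fun j => sg col v * dev G g j)).
        -- rewrite Rsum_scal, H4. ring.
        -- intros j Hj. apply in_at_v in Hj. destruct Hj as [Hj1 Hj2]. rewrite K1, Hj2 by auto. reflexivity.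
      * intros i j Hi Hj. pose proof Hi as Hi'. pose proof Hj as Hj'.
        apply in_at_v in Hi'. apply in_at_v in Hj'.
        rewrite !K2, !ev_scl by tauto. rewrite (H3 i j Hi Hj).
        destruct Hi' as [_ ->]. destruct Hj' as [_ ->]. reflexivity.
Qed.

Lemma T1 B lam h g : lam <> 0 -> is_eigenpair G (AstN G B) lam h g ->
  is_eigenpair G (StD G B) lam (smul G col (scl (- / lam) g)) (smul G col h).
Proof.
  intros Hl [Hs Hc]. split.
  - intros n x Hn. destruct (Hs n x Hn) as [H1 H2]. split.
    + assert (H3 := derivable_pt_lim_scal (g n) (- / lam) x _ H2).
      assert (H4 := derivable_pt_lim_scal (fun y => - / lam * g n y) (sg col (vtx G (2 * n))) x _ H3).
      unfold smul, scl. replace (h n x) with (- / lam * (- lam * h n x)) by (field; auto).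
      exact H4.
    + assert (H4 := derivable_pt_lim_scal (h n) (sg col (vtx G (2 * n))) x _ H1).
      unfold smul, scl. replace (- lam * (sg col (vtx G (2 * n)) * (- / lam * g n x))) with
        (sg col (vtx G (2 * n)) * g n x) by (field; auto). exact H4.
  - intros v Hv. destruct (Hc v Hv) as [H1 H2]. split.
    + intros Bv j Hj. pose proof Hj as Hj'. apply in_at_v in Hj'. destruct Hj' as [Hj1 _].
      rewrite K1, dev_scl, (H1 Bv j Hj) by auto. ring.
    + intros Bv. destruct (H2 Bv) as [H3 H4]. split.
      * intros i j Hi Hj. pose proof Hi as Hi'. pose proof Hj as Hj'.
        apply in_at_v in Hi'. apply in_at_v in Hj'.
        rewrite !K1, !dev_scl by tauto. rewrite (H4 i j Hi Hj).
        destruct Hi' as [_ ->]. destruct Hj' as [_ ->]. reflexivity.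
      * rewrite (Rsum_ext _ _ (fun j => sg col v * ev G h j)).
        -- rewrite Rsum_scal, H3. ring.
        -- intros j Hj. apply in_at_v in Hj. destruct Hj as [Hj1 Hj2]. rewrite K2, Hj2 by auto. reflexivity.
Qed.
End Sign.

Lemma deriv_sum (l : list nat) (d : nat -> R) (F : nat -> R -> R) (F' : nat -> R -> R) x :
  (forall i, In i l -> derivable_pt_lim (F i) x (F' i x)) ->
  derivable_pt_lim (fun y => Rsum (map (fun i => d i * F i y) l)) x (Rsum (map (fun i => d i * F' i x) l)).
Proof.
  induction l as [|a l IH]; intros H; simpl.
  - apply derivable_pt_lim_const.
  - apply (derivable_pt_lim_plus (fun y => d a * F a y) (fun y => Rsum (map (fun i => d i * F i y) l))).
    + apply (derivable_pt_lim_scal (F a) (d a)). apply H; left; auto.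
    + apply IH. intros; apply H; right; auto.
Qed.

Lemma Rsum_scal_r {A} (l : list A) c F :
  Rsum (map (fun x => F x * c) l) = Rsum (map F l) * c.
Proof. induction l; simpl; [lra|rewrite IHl; lra]. Qed.

Lemma Rsum_shift (F : nat -> R) s m :
  Rsum (map F (seq s m)) = Rsum (map (fun i => F (s + i)%nat) (seq 0 m)).
Proof.
  assert (H : forall t, Rsum (map F (seq (s + t) m)) = Rsum (map (fun i => F (s + i)%nat) (seq t m))).
  { induction m; intros t; simpl; auto. rewrite <- IHm. replace (S (s + t)) with (s + S t)%nat by lia. reflexivity. }
  rewrite <- H. rewrite Nat.add_0_r. reflexivity.
Qed.

Lemma Rsum_split (F : nat -> R) k m :
  Rsum (map F (seq 0 (k + m))) = Rsum (map F (seq 0 k)) + Rsum (map (fun i => F (k + i)%nat) (seq 0 m)).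
Proof. rewrite seq_app, map_app, Rsum_app, (Rsum_shift F (0 + k)). reflexivity. Qed.

Lemma lin_indep_nonzero G k fs i : lin_indep G k fs -> (i < k)%nat ->
  ~ (forall n x, (n < nE G)%nat -> ea G n <= x <= eb G n -> fs i n x = 0).
Proof.
  intros Hl Hi Hz.
  assert (H := Hl (fun j => if Nat.eqb j i then 1 else 0)).
  assert (H1 : (if Nat.eqb i i then 1 else 0) = 0).
  { apply H; auto. intros n x Hn Hx.
    rewrite (Rsum_ext _ _ (fun j => if Nat.eqb j i then fs j n x else 0)).
    - rewrite Rsum_ind_in; auto. apply seq_NoDup. apply in_seq; lia.
    - intros j _. destruct (Nat.eqb j i); ring. }
  rewrite Nat.eqb_refl in H1. lra.
Qed.

Lemma lin_indep_sub G K fs k (sel : nat -> nat) : lin_indep G K fs ->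
  (forall j, (j < k)%nat -> (sel j < K)%nat) ->
  (forall j1 j2, (j1 < k)%nat -> (j2 < k)%nat -> sel j1 = sel j2 -> j1 = j2) ->
  lin_indep G k (fun j => fs (sel j)).
Proof.
  intros Hl Hs Hinj d Hd.
  set (c := fun i => Rsum (map (fun j => if Nat.eqb (sel j) i then d j else 0) (seq 0 k))).
  assert (Hc : forall i, (i < K)%nat -> c i = 0).
  { apply Hl. intros n x Hn Hx. rewrite <- (Hd n x Hn Hx). unfold c.
    rewrite (Rsum_ext _ _ (fun i => Rsum (map (fun j => (if Nat.eqb (sel j) i then d j else 0) * fs i n x) (seq 0 k))))
      by (intros; symmetry; apply Rsum_scal_r).
    rewrite Rsum_swap. apply Rsum_ext. intros j Hj. apply in_seq in Hj.
    rewrite (Rsum_ext _ _ (fun i => if Nat.eqb i (sel j) then d j * fs i n x else 0)).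
    - rewrite (Rsum_ind_in _ (sel j) (fun i => d j * fs i n x)); auto. apply seq_NoDup. apply in_seq.
      specialize (Hs j ltac:(lia)). lia.
    - intros i _. rewrite (Nat.eqb_sym (sel j)). destruct (Nat.eqb i (sel j)); ring. }
  intros j0 Hj0. rewrite <- (Hc (sel j0)) by auto. unfold c.
  rewrite (Rsum_ext _ _ (fun j => if Nat.eqb j j0 then d j else 0)).
  - rewrite Rsum_ind_in; auto. apply seq_NoDup. apply in_seq; lia.
  - intros j Hj. apply in_seq in Hj.
    destruct (Nat.eqb_spec (sel j) (sel j0)) as [Heq|Hne], (Nat.eqb_spec j j0); subst; auto.
    + exfalso. apply n. apply Hinj; auto; lia.
    + congruence.
Qed.

Lemma lin_indep_deriv G k (Fs Fs' Hs : nat -> nat -> R -> R) (s : nat -> R) (c : nat -> R) :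
  (forall i n x, (i < k)%nat -> (n < nE G)%nat -> derivable_pt_lim (Fs i n) x (Fs' i n x)) ->
  (forall i n x, (i < k)%nat -> (n < nE G)%nat -> Fs' i n x = s n * (c i * Hs i n x)) ->
  (forall n, (n < nE G)%nat -> s n <> 0) -> (forall i, (i < k)%nat -> c i <> 0) ->
  lin_indep G k Hs -> lin_indep G k Fs.
Proof.
  intros Hd He Hsn Hcn Hl d Hz.
  assert (H : forall i, (i < k)%nat -> d i * c i = 0).
  { apply Hl. intros n x Hn Hx.
    assert (hab := edge_pos G n Hn).
    assert (H0 := const_deriv (fun y => Rsum (map (fun i => d i * Fs i n y) (seq 0 k))) (ea G n) (eb G n) x _ hab
      ltac:(intros y Hy; cbv beta; rewrite (Hz n y Hn Hy), (Hz n (ea G n) Hn); [reflexivity|lra]) Hx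
      (deriv_sum (seq 0 k) d (fun i => Fs i n) (fun i => Fs' i n) x ltac:(intros i Hi; apply in_seq in Hi; apply Hd; auto; lia))).
    rewrite (Rsum_ext _ _ (fun i => s n * (d i * c i * Hs i n x))) in H0.
    - rewrite Rsum_scal in H0. specialize (Hsn n Hn). apply Rmult_integral in H0. destruct H0; [contradiction|auto].
    - intros i Hi. apply in_seq in Hi. rewrite He by (auto; lia). ring. }
  intros i Hi. specialize (H i Hi). specialize (Hcn i Hi). apply Rmult_integral in H. destruct H; [auto|contradiction].
Qed.

Lemma deriv_zero_sum G K (Fs Fs' : nat -> nat -> R -> R) d :
  (forall i n x, (i < K)%nat -> (n < nE G)%nat -> derivable_pt_lim (Fs i n) x (Fs' i n x)) ->
  (forall n x, (n < nE G)%nat -> ea G n <= x <= eb G n -> Rsum (map (fun i => d i * Fs i n x) (seq 0 K)) = 0) ->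
  forall n x, (n < nE G)%nat -> ea G n <= x <= eb G n -> Rsum (map (fun i => d i * Fs' i n x) (seq 0 K)) = 0.
Proof.
  intros Hd Hz n x Hn Hx.
  assert (hab := edge_pos G n Hn).
  exact (const_deriv (fun y => Rsum (map (fun i => d i * Fs i n y) (seq 0 K))) (ea G n) (eb G n) x _ hab
      ltac:(intros y Hy; cbv beta; rewrite (Hz n y Hn Hy), (Hz n (ea G n) Hn); [reflexivity|lra]) Hx
      (deriv_sum (seq 0 K) d (fun i => Fs i n) (fun i => Fs' i n) x ltac:(intros i Hi; apply in_seq in Hi; apply Hd; auto; lia))).
Qed.

Section Main.
Variable G : MetricGraph.
Variable B : nat -> bool.
Variable col : nat -> bool.
Hypothesis Hcon : connected G.
Hypothesis Hbip : forall n, (n < nE G)%nat -> col (vtx G (2 * n)) <> col (vtx G (2 * n + 1)).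
Variable b0 : nat.
Hypothesis Hb0 : B b0 = true.
Hypothesis Hb0V : (b0 < nV G)%nat.

Let r := length (wl G B).
Let m := (nE G - r)%nat.

Lemma S_to_A mu0 k : (1 <= k)%nat -> count_ge G (StD G B) mu0 k -> count_ge G (AstN G B) mu0 (k + m).
Proof.
  intros Hk [mu [fs [gs [Hp Hl]]]].
  assert (Hpos : forall i, (i < k)%nat -> 0 < mu i).
  { intros i Hi. destruct (Rle_lt_dec (mu i) 0) as [Hle|]; auto. exfalso.
    apply (lin_indep_nonzero G k fs i Hl Hi).
    apply (S_nonpos_zero G B (mu i) (fs i) (gs i) Hcon (ex_intro _ b0 (conj Hb0 Hb0V)) Hle).
    apply Hp; auto. }
  assert (Hmu0 : 0 <= mu0).
  { destruct (Hp 0%nat ltac:(lia)) as [H1 _]. specialize (Hpos 0%nat ltac:(lia)). lra. }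
  destruct (LA.LA2 _ _ _ (rowindep_G G B b0 Hcon Hb0 Hb0V)) as [cs [Hcs Hci]].
  exists (fun i => if Nat.ltb i k then mu i else 0).
  exists (fun i => if Nat.ltb i k then smul G col (gs i) else (fun n _ => cs (i - k)%nat n)).
  exists (fun i => if Nat.ltb i k then smul G col (scl (- mu i) (fs i)) else (fun _ _ => 0)).
  split.
  - intros i Hi. destruct (Nat.ltb_spec i k).
    + destruct (Hp i ltac:(auto)) as [H1 H2]. split; auto. apply T2; auto.
    + split; auto. apply A_kernel_pair. apply Kvec_orth. apply Hcs. unfold m, r in *. lia.
  - intros d Hz.
    assert (Hd := deriv_zero_sum G (k + m)
      (fun i => if Nat.ltb i k then smul G col (gs i) else (fun n _ => cs (i - k)%nat n))
      (fun i => if Nat.ltb i k then smul G col (scl (- mu i) (fs i)) else (fun _ _ => 0)) d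
      ltac:(intros i n x Hi Hn; cbv beta; destruct (Nat.ltb_spec i k);
            [destruct (T2 G col Hbip B (mu i) (fs i) (gs i) ltac:(apply Hp; auto)) as [Hs' _]; apply (proj1 (Hs' n x Hn))
            |apply derivable_pt_lim_const]) Hz).
    assert (Hfirst : forall i, (i < k)%nat -> d i = 0).
    { assert (H : forall i, (i < k)%nat -> d i * - mu i = 0).
      { apply Hl. intros n x Hn Hx. specialize (Hd n x Hn Hx). rewrite Rsum_split in Hd.
        rewrite (Rsum_zero (seq 0 m)) in Hd.
        2:{ intros i Hi. destruct (Nat.ltb_spec (k + i) k); [lia|ring]. }
        rewrite (Rsum_ext _ _ (fun i => sg col (vtx G (2*n)) * (d i * - mu i * fs i n x))) in Hd.
        - rewrite Rsum_scal, Rplus_0_r in Hd. apply Rmult_integral in Hd. destruct Hd as [Hd|Hd]; auto.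
          exfalso; exact (sg_nz col _ Hd).
        - intros i Hi. apply in_seq in Hi. destruct (Nat.ltb_spec i k); [|lia]. unfold smul, scl. ring. }
      intros i Hi. specialize (H i Hi). specialize (Hpos i Hi). apply Rmult_integral in H. destruct H; auto. lra. }
    assert (Hsecond : forall i, (i < m)%nat -> d (k + i)%nat = 0).
    { apply (Hci (fun i => d (k + i)%nat)). intros n Hn.
      assert (hab := edge_pos G n Hn).
      specialize (Hz n (ea G n) Hn ltac:(lra)). rewrite Rsum_split in Hz.
      rewrite (Rsum_zero (seq 0 k)) in Hz.
      2:{ intros i Hi. apply in_seq in Hi. rewrite Hfirst by lia. ring. }
      rewrite <- Hz, Rplus_0_l. apply Rsum_ext. intros i _. destruct (Nat.ltb_spec (k + i) k); [lia|].
      replace (k + i - k)%nat with i by lia. lra. }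
    intros i Hi. destruct (Nat.ltb_spec i k); auto.
    replace i with (k + (i - k))%nat by lia. apply Hsecond. lia.
Qed.

Lemma A_to_S mu0 k : count_ge G (AstN G B) mu0 (k + m) -> count_ge G (StD G B) mu0 k.
Proof.
  intros [mu [hs [gs [Hp Hl]]]].
  set (fz := fun i => if Req_EM_T (mu i) 0 then true else false).
  set (Z := filter fz (seq 0 (k + m))).
  set (N := filter (fun i => negb (fz i)) (seq 0 (k + m))).
  assert (Hlen : (length Z + length N = k + m)%nat) by (unfold Z, N; rewrite filter_length, length_seq; auto).
  assert (HZ : forall j, (j < length Z)%nat -> (nth j Z 0 < k + m)%nat /\ mu (nth j Z 0%nat) = 0).
  { intros j Hj. set (e := nth j Z 0%nat). assert (Hin : In e (filter fz (seq 0 (k + m)))) by apply (nth_In Z 0%nat Hj).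
    apply filter_In in Hin.
    destruct Hin as [Hin Hf]. apply in_seq in Hin. split; [lia|]. unfold fz in Hf.
    destruct (Req_EM_T (mu e) 0); auto; discriminate. }
  assert (HN : forall j, (j < length N)%nat -> (nth j N 0 < k + m)%nat /\ mu (nth j N 0%nat) <> 0).
  { intros j Hj. set (e := nth j N 0%nat). assert (Hin : In e (filter (fun i => negb (fz i)) (seq 0 (k + m)))) by apply (nth_In N 0%nat Hj).
    apply filter_In in Hin.
    destruct Hin as [Hin Hf]. apply in_seq in Hin. split; [lia|]. unfold fz in Hf.
    destruct (Req_EM_T (mu e) 0); auto; discriminate. }
  assert (HinjZ : forall j1 j2, (j1 < length Z)%nat -> (j2 < length Z)%nat -> nth j1 Z 0%nat = nth j2 Z 0%nat -> j1 = j2).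
  { apply NoDup_nth. apply NoDup_filter, seq_NoDup. }
  assert (HinjN : forall j1 j2, (j1 < length N)%nat -> (j2 < length N)%nat -> nth j1 N 0%nat = nth j2 N 0%nat -> j1 = j2).
  { apply NoDup_nth. apply NoDup_filter, seq_NoDup. }
  assert (HZm : (length Z <= m)%nat).
  { set (p := length Z).
    assert (Hsub := lin_indep_sub G (k + m) hs p (fun j => nth j Z 0%nat) Hl
      ltac:(intros j Hj; apply HZ; auto) HinjZ).
    assert (Heig : forall j, (j < p)%nat -> is_eigenpair G (AstN G B) 0 (hs (nth j Z 0%nat)) (gs (nth j Z 0%nat))).
    { intros j Hj. destruct (HZ j Hj) as [H1 H2]. rewrite <- H2. apply Hp; auto. }
    assert (H := LA.LA1 _ _ _ (rowindep_G G B b0 Hcon Hb0 Hb0V) p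
      (fun j n => hs (nth j Z 0%nat) n (ea G n))).
    assert (p + r <= nE G)%nat; [|unfold m; lia].
    apply H.
    - intros j Hj. apply Kvec_orth. apply (A_zero_const G B _ _ (Heig j Hj)).
    - intros d Hd. apply Hsub. intros n x Hn Hx. rewrite <- (Hd n Hn). apply Rsum_ext.
      intros j Hj. apply in_seq in Hj. destruct (A_zero_const G B _ _ (Heig j ltac:(lia))) as [Hc _].
      rewrite Hc; auto. }
  assert (HkN : (k <= length N)%nat) by lia.
  set (sel := fun j => nth j N 0%nat).
  exists (fun j => mu (sel j)).
  exists (fun j => smul G col (scl (- / mu (sel j)) (gs (sel j)))).
  exists (fun j => smul G col (hs (sel j))).
  split.
  - intros j Hj. destruct (HN j ltac:(lia)) as [H1 H2]. destruct (Hp (sel j) H1) as [H3 H4].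
    split; auto. apply T1; auto.
  - apply (lin_indep_deriv G k _ (fun j => smul G col (hs (sel j))) (fun j => hs (sel j))
       (fun n => sg col (vtx G (2 * n))) (fun _ => 1)).
    + intros j n x Hj Hn. destruct (HN j ltac:(lia)) as [H1 H2].
      destruct (T1 G col Hbip B _ _ _ H2 (proj2 (Hp (sel j) H1))) as [Hs _]. apply (Hs n x Hn).
    + intros. unfold smul. ring.
    + intros n _. apply sg_nz.
    + intros; lra.
    + apply (lin_indep_sub G (k + m)); auto.
      * intros j Hj. apply HN. lia.
      * intros j1 j2 H1 H2. apply HinjN; lia.
Qed.

End Main.

Theorem mainTheorem9 (G : MetricGraph) (B : nat -> bool) :
  connected G -> bipartite G ->
  (forall v, B v = true -> (v < nV G)%nat /\ degree G v = 1%nat) ->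
  (exists v, B v = true) ->
  forall k : nat, (1 <= k)%nat -> forall lam : R,
    is_kth_eigenvalue G (AstN G B) (k + betti G + cardB G B - 1)%nat lam <->
    is_kth_eigenvalue G (StD G B) k lam.
Proof.
  intros Hcon [col Hbip] HB [b0 Hb0] k Hk lam.
  destruct (HB b0 Hb0) as [Hb0V _].
  assert (HcB := len_wl G B). fold (cardB G B) in HcB.
  assert (HV := V_le G b0 Hcon Hb0V).
  assert (Hr := LA.LA1 _ _ _ (rowindep_G G B b0 Hcon Hb0 Hb0V) 0%nat (fun _ _ => 0)
    ltac:(intros; lia) ltac:(intros d _ i Hi; lia)).
  assert (HcB1 : (1 <= cardB G B)%nat).
  { unfold cardB. assert (Hin : In b0 (filter B (seq 0 (nV G)))) by (apply filter_In; split; auto; apply in_seq; lia).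
    destruct (filter B (seq 0 (nV G))); simpl in *; [contradiction|lia]. }
  replace (k + betti G + cardB G B - 1)%nat with (k + (nE G - length (wl G B)))%nat
    by (unfold betti; lia).
  assert (Heq : forall mu0, count_ge G (AstN G B) mu0 (k + (nE G - length (wl G B))) <-> count_ge G (StD G B) mu0 k).
  { intros mu0. split.
    - apply (A_to_S G B col Hcon Hbip b0 Hb0 Hb0V).
    - apply (S_to_A G B col Hcon Hbip b0 Hb0 Hb0V). auto. }
  unfold is_kth_eigenvalue. split; intros [H1 H2]; split.
  - apply Heq; auto.
  - intros mu Hmu Hc. apply (H2 mu Hmu). apply Heq; auto.
  - apply Heq; auto.
  - intros mu Hmu Hc. apply (H2 mu Hmu). apply Heq; auto.
Qed.
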